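(* Let $a<b$, $0<\epsilon<\min\{1,b-a\}$ and $f\in C^1([a,b])$. Let $\sigma=\tanh$, $\beta=-3\ln(\epsilon)/\epsilon$, $$\rho_\epsilon(x)=\frac{\sigma(\beta(x+\epsilon^2))-\sigma(\beta(x-\epsilon^2))}{2\epsilon^2},\qquad \omega(t)=\sigma\bigl(\beta(t-\max\{a,t-\epsilon\})\bigr)-\sigma\bigl(\beta(t-\min\{b,t+\epsilon\})\bigr).$$ Then for all $t\in[a,b]$ one has $1-\epsilon\le\omega(t)\le2$ and $$\Bigl|\int_a^b f(s)\rho_\epsilon(t-s)\,ds-\omega(t)f(t)\Bigr|\le 20\|f\|_{C^1([a,b])}\,(b-a-\ln\epsilon)\,\epsilon.$$
   Context: $\|f\|_{C^1([a,b])}=\|f\|_{L^\infty([a,b])}+\|f'\|_{L^\infty([a,b])}$. *)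

(* Defs.v *)
From Stdlib Require Import Reals.
From Coquelicot Require Import Coquelicot.
Open Scope R_scope.

Definition tanh (x : R) : R := (exp x - exp (- x)) / (exp x + exp (- x)).

Definition is_C1_on (a b : R) (f f' : R -> R) : Prop :=
  (forall x, a <= x <= b ->
     filterlim (fun h => (f (x + h) - f x) / h)
       (within (fun h => h <> 0 /\ a <= x + h <= b) (locally 0))
       (locally (f' x))) /\
  (forall x, a <= x <= b ->
     filterlim f' (within (fun y => a <= y <= b) (locally x)) (locally (f' x))).

Definition Linf_norm (a b : R) (g : R -> R) : R :=
  real (Lub_Rbar (fun y => exists x, a <= x <= b /\ y = Rabs (g x))).

Definition C1_norm (a b : R) (f f' : R -> R) : R :=
  Linf_norm a b f + Linf_norm a b f'.

Definition beta_eps (eps : R) : R := - 3 * ln eps / eps.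

Definition rho_eps (eps x : R) : R :=
  (tanh (beta_eps eps * (x + eps ^ 2)) - tanh (beta_eps eps * (x - eps ^ 2)))
  / (2 * eps ^ 2).

Definition omega (a b eps t : R) : R :=
  tanh (beta_eps eps * (t - Rmax a (t - eps)))
  - tanh (beta_eps eps * (t - Rmin b (t + eps))).

(* Main.v *)
Require Import Defs.
From Stdlib Require Import Reals Lra.
From Coquelicot Require Import Coquelicot.
Open Scope R_scope.

Lemma exp_sum_pos x : 0 < exp x + exp (- x).
Proof. pose proof (exp_pos x); pose proof (exp_pos (-x)); lra. Qed.

Lemma tanh_alt x : Defs.tanh x = 1 - 2 / (exp (2 * x) + 1).
Proof.
  unfold Defs.tanh.
  assert (E : exp (2 * x) = exp x * exp x) by (rewrite <- exp_plus; f_equal; ring).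
  assert (E2 : exp (- x) = / exp x) by apply exp_Ropp.
  pose proof (exp_pos x).
  rewrite E, E2. field. split; try lra. nra.
Qed.

Lemma tanh_lt1 x : Defs.tanh x < 1.
Proof.
  rewrite tanh_alt. pose proof (exp_pos (2*x)).
  assert (0 < 2 / (exp (2 * x) + 1)) by (apply Rdiv_lt_0_compat; lra). lra.
Qed.

Lemma tanh_odd x : Defs.tanh (- x) = - Defs.tanh x.
Proof. unfold Defs.tanh. rewrite Ropp_involutive. pose proof (exp_sum_pos x). field. lra. Qed.

Lemma tanh_gtm1 x : -1 < Defs.tanh x.
Proof. pose proof (tanh_lt1 (-x)). rewrite tanh_odd in H. lra. Qed.

Lemma tanh_incr x y : x <= y -> Defs.tanh x <= Defs.tanh y.
Proof.
  intros H. rewrite !tanh_alt.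
  assert (exp (2*x) <= exp (2*y)).
  { destruct (Req_dec x y). subst; lra. left. apply exp_increasing. lra. }
  pose proof (exp_pos (2*x)).
  assert (2 / (exp (2 * y) + 1) <= 2 / (exp (2 * x) + 1)).
  { unfold Rdiv. apply Rmult_le_compat_l. lra. apply Rinv_le_contravar; lra. }
  lra.
Qed.

Lemma tanh_0 : Defs.tanh 0 = 0.
Proof. unfold Defs.tanh. rewrite Ropp_0. field_simplify; try lra. pose proof (exp_pos 0). lra. Qed.

Lemma tanh_nonneg x : 0 <= x -> 0 <= Defs.tanh x.
Proof. intros H. rewrite <- tanh_0. now apply tanh_incr. Qed.

Lemma tanh_derive x : is_derive Defs.tanh x (1 - Defs.tanh x ^ 2).
Proof.
  unfold Defs.tanh. pose proof (exp_sum_pos x).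
  auto_derive. lra.
  field. lra.
Qed.

Lemma tanh_cont x : continuity_pt Defs.tanh x.
Proof.
  apply continuity_pt_filterlim. apply (ex_derive_continuous Defs.tanh).
  eexists; apply tanh_derive.
Qed.

Lemma tanh_lip x y : x <= y -> Defs.tanh y - Defs.tanh x <= y - x.
Proof.
  intros H.
  destruct (MVT_gen Defs.tanh x y (fun z => 1 - Defs.tanh z ^ 2)) as [c [_ Hc]].
  - intros; apply tanh_derive.
  - intros; apply tanh_cont.
  - rewrite Hc. assert (0 <= Defs.tanh c ^ 2) by (apply pow2_ge_0).
    assert (0 <= y - x) by lra. nra.
Qed.

Lemma tanh_subadd x y : 0 <= x -> 0 <= y -> Defs.tanh (x + y) <= Defs.tanh x + Defs.tanh y.
Proof.
  intros Hx Hy. rewrite !tanh_alt.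
  assert (E : exp (2 * (x + y)) = exp (2*x) * exp (2*y)) by (rewrite <- exp_plus; f_equal; ring).
  rewrite E.
  assert (1 <= exp (2*x)) by (pose proof (exp_ineq1_le (2*x)); lra).
  assert (1 <= exp (2*y)) by (pose proof (exp_ineq1_le (2*y)); lra).
  set (p := exp (2*x)) in *. set (q := exp (2*y)) in *.
  assert (0 <= (p - 1) * (q - 1)) by nra.
  apply Rminus_le_0.
  replace (1 - 2 / (p + 1) + (1 - 2 / (q + 1)) - (1 - 2 / (p * q + 1)))
    with ((p - 1) * (q - 1) * (p * q - 1) / ((p+1)*(q+1)*(p*q+1))) by (field; nra).
  apply Rmult_le_pos. apply Rmult_le_pos; nra. left; apply Rinv_0_lt_compat. 
  assert (0 < p*q) by nra. nra.
Qed.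

Lemma one_minus_tanh x : 1 - Defs.tanh x <= 2 * exp (- (2 * x)).
Proof.
  rewrite tanh_alt, exp_Ropp. pose proof (exp_pos (2*x)).
  replace (1 - (1 - 2 / (exp (2 * x) + 1))) with (2 / (exp (2 * x) + 1)) by ring.
  unfold Rdiv. apply Rmult_le_compat_l. lra. apply Rinv_le_contravar; lra.
Qed.

Section Eps.
Variable eps : R.
Hypothesis He0 : 0 < eps.
Hypothesis He1 : eps < 1.

Lemma L_pos : 0 < - ln eps.
Proof. assert (ln eps < ln 1) by (apply ln_increasing; lra). rewrite ln_1 in H. lra. Qed.

Lemma exp_mL : exp (- (- ln eps)) = eps.
Proof. rewrite Ropp_involutive. apply exp_ln. lra. Qed.

Lemma L_upper : eps * (- ln eps) <= 1 - eps.
Proof.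
  pose proof (exp_ineq1_le (- ln eps)).
  rewrite exp_Ropp, exp_ln in H by lra.
  assert (eps * (1 + - ln eps) <= eps * / eps) by (apply Rmult_le_compat_l; lra).
  rewrite Rinv_r in H0 by lra. lra.
Qed.

Lemma L_lower : 1 - eps <= - ln eps.
Proof. pose proof (exp_ineq1_le (- - ln eps)). rewrite exp_mL in H. lra. Qed.

Lemma Beps : beta_eps eps * eps = 3 * (- ln eps).
Proof. unfold beta_eps. field. lra. Qed.

Lemma B_pos : 0 < beta_eps eps.
Proof.
  pose proof L_pos. unfold beta_eps.
  replace (-3 * ln eps / eps) with (3 * (- ln eps) * / eps) by (field; lra).
  apply Rmult_lt_0_compat. lra. apply Rinv_0_lt_compat; lra.
Qed.

Lemma expL : exp (- ln eps) = / eps.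
Proof. rewrite exp_Ropp, exp_ln; lra. Qed.

Lemma tanh_Beps : 1 - eps <= Defs.tanh (beta_eps eps * eps).
Proof.
  rewrite Beps, tanh_alt. pose proof L_pos.
  assert (E : exp (2 * (- ln eps)) = / eps * / eps).
  { replace (2 * (- ln eps)) with (- ln eps + - ln eps) by ring.
    rewrite exp_plus, expL. ring. }
  assert (exp (2 * (- ln eps)) <= exp (2 * (3 * - ln eps))).
  { left. apply exp_increasing. lra. }
  rewrite E in H0.
  assert (0 < / eps) by (apply Rinv_0_lt_compat; lra).
  set (u := exp (2 * (3 * - ln eps))) in *.
  assert (2 / (u + 1) <= eps).
  { apply (Rmult_le_reg_r (u+1)). nra. unfold Rdiv. rewrite Rmult_assoc, Rinv_l by nra.
    assert (eps * / eps = 1) by (field; lra).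
    assert (eps * (/eps * /eps) = /eps) by (field; lra).
    assert (/eps * / eps * eps <= u * eps) by (apply Rmult_le_compat_r; lra).
    nra. }
  lra.
Qed.

Lemma key_exp : - ln eps * (6 * eps - 3) <= 1.
Proof.
  pose proof L_pos. pose proof L_upper.
  destruct (Rle_dec (6*eps - 3) 0). nra.
  assert (- ln eps * (6 * eps - 3) * eps <= (1 - eps) * (6*eps - 3)) by nra.
  assert ((1 - eps) * (6*eps - 3) <= eps) by nra.
  nra.
Qed.

Lemma C_bound_exp : 2 * exp (- (2 * (beta_eps eps * (eps - eps ^ 2)))) <= 6 * eps * eps ^ 2.
Proof.
  assert (E : beta_eps eps * (eps - eps ^ 2) = 3 * (- ln eps) * (1 - eps)).
  { rewrite <- Beps. ring. }
  rewrite E.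
  replace (- (2 * (3 * - ln eps * (1 - eps))))
    with ((- ln eps * (6 * eps - 3)) + - (- ln eps) + - (- ln eps) + - (- ln eps)) by ring.
  rewrite !exp_plus, !exp_mL.
  pose proof key_exp.
  assert (exp (- ln eps * (6 * eps - 3)) <= exp 1).
  { destruct (Req_dec (- ln eps * (6 * eps - 3)) 1) as [e|e]. rewrite e; lra.
    left; apply exp_increasing; lra. }
  pose proof exp_le_3. pose proof (exp_pos (- ln eps * (6 * eps - 3))).
  assert (0 < eps^3) by (apply pow_lt; lra).
  set (X := exp (- ln eps * (6 * eps - 3))) in *.
  assert (X * eps^3 <= 3 * eps^3) by (apply Rmult_le_compat_r; lra).
  simpl in *. replace (2 * (X * eps * eps * eps)) with (2 * (X * (eps * (eps * (eps * 1))))) by ring. replace (6 * eps * (eps * (eps * 1))) with (6 * (eps * (eps * (eps * 1)))) by ring. lra.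
Qed.

End Eps.

Definition Gf (B y : R) := ln (exp (B * y) + exp (- (B * y))) / B.
Definition Phi (eps x : R) :=
  (Gf (beta_eps eps) (x + eps ^ 2) - Gf (beta_eps eps) (x - eps ^ 2)) / (2 * eps ^ 2).

Lemma Gf_derive B y : B <> 0 -> is_derive (Gf B) y (Defs.tanh (B * y)).
Proof.
  intros HB. unfold Gf, Defs.tanh. pose proof (exp_sum_pos (B*y)).
  auto_derive. lra. field. lra.
Qed.

Section Rho.
Variable eps : R.
Hypothesis He0 : 0 < eps.
Hypothesis He1 : eps < 1.
Local Notation B := (beta_eps eps).
Local Notation h := (eps ^ 2).

Lemma h_pos : 0 < h.
Proof. apply pow_lt; lra. Qed.

Lemma rho_nonneg x : 0 <= rho_eps eps x.
Proof.
  unfold rho_eps. pose proof (B_pos eps He0 He1). pose proof h_pos.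
  apply Rdiv_le_0_compat; [|lra].
  assert (Defs.tanh (beta_eps eps * (x - eps ^ 2)) <= Defs.tanh (beta_eps eps * (x + eps ^ 2))).
  { apply tanh_incr. apply Rmult_le_compat_l; lra. }
  lra.
Qed.

Lemma rho_even x : rho_eps eps (- x) = rho_eps eps x.
Proof.
  unfold rho_eps.
  replace (beta_eps eps * (- x + eps ^ 2)) with (- (beta_eps eps * (x - eps ^ 2))) by ring.
  replace (beta_eps eps * (- x - eps ^ 2)) with (- (beta_eps eps * (x + eps ^ 2))) by ring.
  rewrite !tanh_odd. field. pose proof h_pos. lra.
Qed.

Lemma rho_tail_pos x : eps <= x -> rho_eps eps x <= 3 * eps.
Proof.
  intros Hx. unfold rho_eps. pose proof (B_pos eps He0 He1). pose proof h_pos.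
  pose proof (tanh_lt1 (beta_eps eps * (x + eps ^ 2))).
  assert (Defs.tanh (beta_eps eps * (eps - eps ^ 2)) <= Defs.tanh (beta_eps eps * (x - eps ^ 2))).
  { apply tanh_incr. apply Rmult_le_compat_l; lra. }
  pose proof (one_minus_tanh (beta_eps eps * (eps - eps ^ 2))).
  pose proof (C_bound_exp eps He0 He1).
  
  apply (Rmult_le_reg_r (2 * h)). lra.
  unfold Rdiv. rewrite Rmult_assoc, Rinv_l by lra. nra.
Qed.

Lemma rho_tail x : eps <= Rabs x -> rho_eps eps x <= 3 * eps.
Proof.
  intros H. destruct (Rle_dec 0 x).
  - rewrite Rabs_right in H by lra. now apply rho_tail_pos.
  - rewrite Rabs_left in H by lra. rewrite <- rho_even. apply rho_tail_pos. lra.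
Qed.

Lemma Phi_bounds x :
  Defs.tanh (B * (x - h)) <= Phi eps x <= Defs.tanh (B * (x + h)).
Proof.
  pose proof (B_pos eps He0 He1). pose proof h_pos.
  destruct (MVT_gen (Gf B) (x - h) (x + h) (fun y => Defs.tanh (B * y))) as [c [Hc E]].
  - intros; apply Gf_derive; lra.
  - intros. apply continuity_pt_filterlim. apply (ex_derive_continuous (Gf B)).
    eexists; apply Gf_derive; lra.
  - rewrite Rmin_left in Hc by lra. rewrite Rmax_right in Hc by lra.
    unfold Phi. rewrite E.
    replace (Defs.tanh (B * c) * (x + h - (x - h)) / (2 * h)) with (Defs.tanh (B * c)) by (field; lra).
    split; apply tanh_incr; apply Rmult_le_compat_l; lra.
Qed.

Lemma tanh_spread x : Defs.tanh (B * (x + h)) - Defs.tanh (B * (x - h)) <= 6 * (- ln eps) * eps.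
Proof.
  pose proof (B_pos eps He0 He1). pose proof h_pos.
  eapply Rle_trans. apply tanh_lip. apply Rmult_le_compat_l; lra.
  replace (B * (x + h) - B * (x - h)) with (2 * (B * eps) * eps) by (ring).
  rewrite Beps by lra. lra.
Qed.

End Rho.

Section J.
Variable eps : R.
Hypothesis He0 : 0 < eps.
Hypothesis He1 : eps < 1.
Local Notation B := (beta_eps eps).
Local Notation h := (eps ^ 2).

Lemma rho_ex_derive t x : ex_derive (fun s => rho_eps eps (t - s)) x.
Proof.
  unfold rho_eps, Defs.tanh.
  pose proof (exp_sum_pos (B * (t - x + h))). pose proof (exp_sum_pos (B * (t - x - h))).
  pose proof h_pos eps He0.
  auto_derive. repeat split; apply Rgt_not_eq; apply exp_sum_pos.
Qed.

Lemma rho_cont t x : continuous (fun s => rho_eps eps (t - s)) x.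
Proof. apply (@ex_derive_continuous R_AbsRing R_NormedModule). apply rho_ex_derive. Qed.

Lemma mPhi_derive t x : is_derive (fun s => - Phi eps (t - s)) x (rho_eps eps (t - x)).
Proof.
  pose proof (B_pos eps He0 He1). pose proof (h_pos eps He0).
  unfold Phi, Gf, rho_eps, Defs.tanh.
  pose proof (exp_sum_pos (B * (t - x + h))). pose proof (exp_sum_pos (B * (t - x - h))).
  auto_derive. repeat split; try lra; first [apply Rgt_not_eq; apply exp_sum_pos | apply exp_sum_pos].
  replace (t + - x + eps * (eps * 1)) with (t - x + h) by ring.
  replace (t + - x + - (eps * (eps * 1))) with (t - x - h) by ring.
  field. repeat split; lra.
Qed.

Lemma J_is_RInt t a b :
  is_RInt (fun s => rho_eps eps (t - s)) a b (Phi eps (t - a) - Phi eps (t - b)).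
Proof.
  replace (Phi eps (t - a) - Phi eps (t - b)) with (minus (- Phi eps (t - b)) (- Phi eps (t - a)))
    by (unfold minus, plus, opp; simpl; ring).
  apply (is_RInt_derive (fun s => - Phi eps (t - s))).
  - intros; apply mPhi_derive.
  - intros; apply rho_cont.
Qed.

Lemma phi_close x y :
  (y = x \/ (eps <= x /\ y = eps) \/ (x <= - eps /\ y = - eps)) ->
  Rabs (Phi eps x - Defs.tanh (B * y)) <= 6 * (- ln eps) * eps + eps.
Proof.
  intros Hy. pose proof (B_pos eps He0 He1). pose proof (h_pos eps He0).
  pose proof (Phi_bounds eps He0 He1 x). pose proof (tanh_spread eps He0 He1 x).
  assert (Defs.tanh (B * (x - h)) <= Defs.tanh (B * x) <= Defs.tanh (B * (x + h))).
  { split; apply tanh_incr; apply Rmult_le_compat_l; lra. }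
  assert (Rabs (Defs.tanh (B * x) - Defs.tanh (B * y)) <= eps).
  { pose proof (tanh_Beps eps He0 He1).
    destruct Hy as [-> | [[Hx ->] | [Hx ->]]].
    - rewrite Rminus_diag, Rabs_R0; lra.
    - pose proof (tanh_lt1 (B * x)).
      assert (Defs.tanh (B * eps) <= Defs.tanh (B * x)) by (apply tanh_incr; apply Rmult_le_compat_l; lra).
      apply Rabs_le; lra.
    - pose proof (tanh_gtm1 (B * x)).
      assert (Defs.tanh (B * x) <= Defs.tanh (B * - eps)) by (apply tanh_incr; apply Rmult_le_compat_l; lra).
      replace (B * - eps) with (- (B * eps)) in * by ring. rewrite tanh_odd in *.
      apply Rabs_le; lra. }
  replace (Phi eps x - Defs.tanh (B * y)) with
    ((Phi eps x - Defs.tanh (B * x)) + (Defs.tanh (B * x) - Defs.tanh (B * y))) by ring.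
  eapply Rle_trans. apply Rabs_triang.
  assert (Rabs (Phi eps x - Defs.tanh (B * x)) <= 6 * (- ln eps) * eps) by (apply Rabs_le; lra).
  lra.
Qed.

Lemma Phi_abs x : Rabs (Phi eps x) <= 1.
Proof.
  pose proof (Phi_bounds eps He0 He1 x).
  pose proof (tanh_lt1 (B * (x + h))). pose proof (tanh_gtm1 (B * (x - h))).
  apply Rabs_le; lra.
Qed.

End J.

Lemma unpack_within (D : R -> Prop) (u : R -> R) (l x0 : R) :
  filterlim u (within D (locally x0)) (locally l) ->
  forall e, 0 < e -> exists d, 0 < d /\ forall y, Rabs (y - x0) < d -> D y -> Rabs (u y - l) < e.
Proof.
  intros H e He.
  specialize (H (ball l (mkposreal e He)) (locally_ball l (mkposreal e He))).
  destruct H as [d Hd]. exists d. split. apply cond_pos.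
  intros y Hy HD. apply (Hd y Hy HD).
Qed.

Definition clamp (a b x : R) := Rmax a (Rmin b x).

Lemma clamp_in a b x : a <= b -> a <= clamp a b x <= b.
Proof. intros; unfold clamp, Rmax, Rmin; repeat destruct Rle_dec; lra. Qed.

Lemma clamp_id a b x : a <= x <= b -> clamp a b x = x.
Proof. intros; unfold clamp, Rmax, Rmin; repeat destruct Rle_dec; lra. Qed.

Lemma clamp_lip a b x y : a <= b -> Rabs (clamp a b y - clamp a b x) <= Rabs (y - x).
Proof.
  intros; unfold clamp, Rmax, Rmin; repeat destruct Rle_dec;
  unfold Rabs; repeat destruct Rcase_abs; lra.
Qed.

Definition wcont (a b : R) (k : R -> R) :=
  forall x, a <= x <= b -> forall e, 0 < e ->
    exists d, 0 < d /\ forall y, a <= y <= b -> Rabs (y - x) < d -> Rabs (k y - k x) < e.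

Lemma wcont_clamp a b k : a <= b -> wcont a b k -> forall x, continuity_pt (fun y => k (clamp a b y)) x.
Proof.
  intros Hab Hk x e He.
  destruct (Hk (clamp a b x) (clamp_in a b x Hab) e He) as [d [Hd Hd']].
  exists d. split. lra.
  intros y [_ Hy]. simpl in *. unfold R_dist in *.
  apply Hd'. apply clamp_in; auto.
  pose proof (clamp_lip a b x y Hab). lra.
Qed.

Lemma wcont_max a b k : a <= b -> wcont a b k ->
  exists x0, a <= x0 <= b /\ forall x, a <= x <= b -> Rabs (k x) <= Rabs (k x0).
Proof.
  intros Hab Hk.
  destruct (continuity_ab_maj (fun y => Rabs (k (clamp a b y))) a b Hab) as [x0 [H1 H2]].
  - intros c _. apply (continuity_pt_comp (fun y => k (clamp a b y)) Rabs).
    apply wcont_clamp; auto. apply Rcontinuity_abs.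
  - exists x0. split; auto. intros x Hx. specialize (H1 x Hx). simpl in H1.
    rewrite !clamp_id in H1; auto.
Qed.

Lemma Linf_bound a b k : a <= b -> wcont a b k ->
  0 <= Linf_norm a b k /\ forall x, a <= x <= b -> Rabs (k x) <= Linf_norm a b k.
Proof.
  intros Hab Hk. destruct (wcont_max a b k Hab Hk) as [x0 [Hx0 Hm]].
  assert (E : Linf_norm a b k = Rabs (k x0)).
  { unfold Linf_norm. rewrite (is_lub_Rbar_unique _ (Finite (Rabs (k x0)))). reflexivity.
    split.
    - intros y [x [Hx ->]]. simpl. now apply Hm.
    - intros l Hl. apply Hl. exists x0; auto. }
  rewrite E. split. apply Rabs_pos. exact Hm.
Qed.

Section F.
Variables (a b : R) (f f' : R -> R).
Hypothesis Hab : a < b.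
Hypothesis Hf : is_C1_on a b f f'.

Lemma wcont_f : wcont a b f.
Proof.
  intros x Hx e He. destruct Hf as [Hd _].
  destruct (unpack_within _ _ _ _ (Hd x Hx) 1 Rlt_0_1) as [d [Hd0 Hd1]].
  set (K := Rabs (f' x) + 1).
  assert (HK : 0 < K) by (unfold K; pose proof (Rabs_pos (f' x)); lra).
  exists (Rmin d (e / K)). split. apply Rmin_pos; auto. apply Rdiv_lt_0_compat; lra.
  intros y Hy Hyx.
  destruct (Req_dec y x) as [->|Hne]. rewrite Rminus_diag, Rabs_R0; lra.
  assert (Hr : Rabs (y - x) < d) by (pose proof (Rmin_l d (e/K)); lra).
  assert (Hr2 : Rabs (y - x) < e / K) by (pose proof (Rmin_r d (e/K)); lra).
  specialize (Hd1 (y - x)). rewrite Rminus_0_r in Hd1.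
  specialize (Hd1 Hr). replace (x + (y - x)) with y in Hd1 by ring.
  assert (Hyx0 : y - x <> 0) by lra.
  specialize (Hd1 (conj Hyx0 Hy)).
  assert (Rabs ((f y - f x) / (y - x)) <= K).
  { unfold K. replace ((f y - f x) / (y - x)) with (((f y - f x) / (y - x) - f' x) + f' x) by ring.
    eapply Rle_trans. apply Rabs_triang. lra. }
  replace (f y - f x) with ((f y - f x) / (y - x) * (y - x)) by (field; auto).
  rewrite Rabs_mult.
  assert (Rabs (y - x) * K < e).
  { apply (Rmult_lt_compat_r K) in Hr2; auto. unfold Rdiv in Hr2. rewrite Rmult_assoc, Rinv_l in Hr2; lra. }
  pose proof (Rabs_pos (y - x)). nra.
Qed.

Lemma wcont_f' : wcont a b f'.
Proof.
  intros x Hx e He. destruct Hf as [_ Hc].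
  destruct (unpack_within _ _ _ _ (Hc x Hx) e He) as [d [Hd0 Hd1]].
  exists d. split; [lra|]. intros y Hy Hyx. apply Hd1; auto.
Qed.

Lemma g_derive x : a < x < b -> is_derive (fun y => f (clamp a b y)) x (f' x).
Proof.
  intros Hx. apply is_derive_Reals. intros e He.
  destruct Hf as [Hd _].
  assert (Hx' : a <= x <= b) by lra.
  destruct (unpack_within _ _ _ _ (Hd x Hx') e He) as [d [Hd0 Hd1]].
  assert (Hpos : 0 < Rmin d (Rmin (x - a) (b - x))).
  { apply Rmin_pos; auto. apply Rmin_pos; lra. }
  exists (mkposreal _ Hpos). intros y Hy0 Hy. simpl in Hy.
  pose proof (Rmin_l d (Rmin (x - a) (b - x))). pose proof (Rmin_r d (Rmin (x - a) (b - x))).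
  pose proof (Rmin_l (x - a) (b - x)). pose proof (Rmin_r (x - a) (b - x)).
  assert (Hin : a <= x + y <= b) by (apply Rabs_lt_between in Hy; lra).
  rewrite (clamp_id a b (x + y)) by auto. rewrite (clamp_id a b x) by auto.
  apply Hd1. rewrite Rminus_0_r; lra. split; auto.
Qed.

Lemma f_lip x y : a <= x <= b -> a <= y <= b -> Rabs (f y - f x) <= Linf_norm a b f' * Rabs (y - x).
Proof.
  intros Hx Hy.
  destruct (Linf_bound a b f' (Rlt_le _ _ Hab) wcont_f') as [_ Hb].
  destruct (MVT_gen (fun z => f (clamp a b z)) x y f') as [c [Hc E]].
  - intros z Hz. apply g_derive.
    split; [apply Rle_lt_trans with (Rmin x y) | apply Rlt_le_trans with (Rmax x y)]; try tauto.
    unfold Rmin; destruct Rle_dec; lra. unfold Rmax; destruct Rle_dec; lra.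
  - intros; apply wcont_clamp. lra. apply wcont_f.
  - rewrite !clamp_id in E by auto. rewrite E, Rabs_mult.
    apply Rmult_le_compat_r. apply Rabs_pos. apply Hb.
    split; [apply Rle_trans with (Rmin x y) | apply Rle_trans with (Rmax x y)]; try tauto.
    unfold Rmin; destruct Rle_dec; lra. unfold Rmax; destruct Rle_dec; lra.
Qed.

End F.

Lemma exR_cont (k : R -> R) a b : (forall x, continuity_pt k x) -> ex_RInt k a b.
Proof.
  intros H. apply (@ex_RInt_continuous R_CompleteNormedModule). intros z _. apply continuity_pt_filterlim, H.
Qed.

Lemma rho_cpt eps t : 0 < eps -> eps < 1 -> forall x, continuity_pt (fun s => rho_eps eps (t - s)) x.
Proof. intros. apply continuity_pt_filterlim. apply rho_cont; auto. Qed.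

Theorem lemmaA4 (a b eps : R) (f f' : R -> R)
  (Hab : a < b) (Heps0 : 0 < eps) (Heps1 : eps < Rmin 1 (b - a))
  (Hf : is_C1_on a b f f') :
  forall t, a <= t <= b ->
    (1 - eps <= omega a b eps t <= 2) /\
    Rabs (RInt (fun s => f s * rho_eps eps (t - s)) a b - omega a b eps t * f t)
      <= 20 * C1_norm a b f f' * (b - a - ln eps) * eps.
Proof.
  intros t Ht.
  assert (He1 : eps < 1) by (pose proof (Rmin_l 1 (b - a)); lra).
  assert (Heba : eps < b - a) by (pose proof (Rmin_r 1 (b - a)); lra).
  pose proof (B_pos eps Heps0 He1) as HB.
  set (B := beta_eps eps) in *.
  set (m1 := t - Rmax a (t - eps)).
  set (m2 := Rmin b (t + eps) - t).
  assert (Hm1 : 0 <= m1 <= eps /\ (m1 = eps \/ m1 = t - a)).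
  { unfold m1, Rmax; destruct Rle_dec; lra. }
  assert (Hm2 : 0 <= m2 <= eps /\ (m2 = eps \/ m2 = b - t)).
  { unfold m2, Rmin; destruct Rle_dec; lra. }
  assert (Eom : omega a b eps t = Defs.tanh (B * m1) + Defs.tanh (B * m2)).
  { unfold omega. fold B. fold m1.
    replace (B * (t - Rmin b (t + eps))) with (- (B * m2)) by (unfold m2; ring).
    rewrite tanh_odd. ring. }
  pose proof (tanh_Beps eps Heps0 He1) as HTe. fold B in HTe.
  split.
  {
    rewrite Eom.
    pose proof (tanh_lt1 (B * m1)). pose proof (tanh_lt1 (B * m2)).
    assert (0 <= Defs.tanh (B * m1)) by (apply tanh_nonneg; nra).
    assert (0 <= Defs.tanh (B * m2)) by (apply tanh_nonneg; nra).
    split; [|lra].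
    destruct Hm1 as [Hm1a [Hm1b|Hm1b]].
    { rewrite Hm1b. lra. }
    destruct Hm2 as [Hm2a [Hm2b|Hm2b]].
    { rewrite Hm2b. lra. }
    assert (Defs.tanh (B * eps) <= Defs.tanh (B * m1 + B * m2)).
    { apply tanh_incr. rewrite Hm1b, Hm2b. nra. }
    pose proof (tanh_subadd (B * m1) (B * m2)). 
    assert (Defs.tanh (B * m1 + B * m2) <= Defs.tanh (B * m1) + Defs.tanh (B * m2)) by (apply H4; nra).
    lra. }
  set (M := Linf_norm a b f). set (M' := Linf_norm a b f').
  destruct (Linf_bound a b f (Rlt_le _ _ Hab) (wcont_f a b f f' Hf)) as [HM0 HM].
  destruct (Linf_bound a b f' (Rlt_le _ _ Hab) (wcont_f' a b f f' Hf)) as [HM'0 HM'].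
  fold M M' in HM0, HM, HM'0, HM'.
  set (g := fun s => f (clamp a b s)).
  assert (Hgc : forall x, continuity_pt g x).
  { intros; apply wcont_clamp. lra. apply (wcont_f a b f f' Hf). }
  assert (Hgt : g t = f t) by (unfold g; rewrite clamp_id; auto).
  set (rt := fun s => rho_eps eps (t - s)).
  assert (Hrc : forall x, continuity_pt rt x) by (apply rho_cpt; auto).
  set (K := fun s => (g s - g t) * rt s).
  set (Q := fun s => g t * rt s).
  assert (exK : ex_RInt K a b).
  { apply exR_cont. intros x. unfold K.
    apply (continuity_pt_mult (fun s => g s - g t) rt); auto.
    apply (continuity_pt_minus g (fun _ => g t)); auto. apply continuity_pt_const. intros u v; auto. }
  assert (exrt : ex_RInt rt a b) by (apply exR_cont; auto).
  assert (exQ : ex_RInt Q a b).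
  { apply exR_cont. intros x. unfold Q.
    apply (continuity_pt_mult (fun _ => g t) rt); auto. apply continuity_pt_const. intros u v; auto. }
  set (J := Phi eps (t - a) - Phi eps (t - b)).
  assert (EJ : RInt rt a b = J) by (apply is_RInt_unique; apply J_is_RInt; auto).
  assert (EI : RInt (fun s => f s * rho_eps eps (t - s)) a b = RInt K a b + g t * J).
  { rewrite <- EJ.
    transitivity (RInt (fun s => K s + Q s) a b).
    - apply RInt_ext. intros x Hx. rewrite Rmin_left, Rmax_right in Hx by lra.
      unfold K, Q, rt, g. rewrite (clamp_id a b x) by lra. change (f x * rho_eps eps (t - x) = (f x - f (clamp a b t)) * rho_eps eps (t - x) + f (clamp a b t) * rho_eps eps (t - x)). ring.
    - transitivity (RInt K a b + RInt Q a b).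
      + apply (RInt_plus K Q a b); auto.
      + f_equal. apply (RInt_scal rt a b (g t)); auto. }
  set (U := fun s => M' * eps * rt s + 6 * M * eps).
  assert (exU : ex_RInt U a b).
  { apply exR_cont. intros x. unfold U.
    apply (continuity_pt_plus (fun s => M' * eps * rt s) (fun _ => 6 * M * eps)).
    apply (continuity_pt_mult (fun _ => M' * eps) rt); auto. apply continuity_pt_const. intros u v; auto.
    apply continuity_pt_const. intros u v; auto. }
  assert (EU : RInt U a b = M' * eps * J + 6 * M * eps * (b - a)).
  { transitivity (RInt (fun s => M' * eps * rt s) a b + RInt (fun _ => 6 * M * eps) a b).
    - apply (RInt_plus (fun s => M' * eps * rt s) (fun _ => 6 * M * eps) a b).
      apply (@ex_RInt_scal R_CompleteNormedModule rt a b (M' * eps)); auto.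
      apply (@ex_RInt_const R_CompleteNormedModule).
    - assert (E1 : RInt (fun s => M' * eps * rt s) a b = M' * eps * RInt rt a b)
        by (apply (RInt_scal rt a b (M' * eps)); auto).
      assert (E2 : RInt (fun _ => 6 * M * eps) a b = (b - a) * (6 * M * eps))
        by (apply (@RInt_const R_CompleteNormedModule)).
      rewrite E1, E2, EJ. change (@eq R (M' * eps * J + (b - a) * (6 * M * eps)) (M' * eps * J + 6 * M * eps * (b - a))). ring. }
  assert (Hpt : forall s, a < s < b -> Rabs (K s) <= U s).
  { intros s Hs. unfold K, U, rt, g. rewrite !clamp_id by lra.
    pose proof (rho_nonneg eps Heps0 He1 (t - s)).
    rewrite Rabs_mult, (Rabs_right (rho_eps eps (t - s))) by lra.
    assert (Hs' : a <= s <= b) by lra.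
    destruct (Rle_dec (Rabs (t - s)) eps).
    - pose proof (f_lip a b f f' Hab Hf t s Ht Hs'). fold M' in H0.
      rewrite Rabs_minus_sym in r.
      assert (Rabs (f s - f t) <= M' * eps).
      { eapply Rle_trans. apply H0. apply Rmult_le_compat_l; auto. }
      assert (0 <= M * eps) by nra.
      assert (Rabs (f s - f t) * rho_eps eps (t - s) <= M' * eps * rho_eps eps (t - s)) by
        (apply Rmult_le_compat_r; auto).
      lra.
    - pose proof (rho_tail eps Heps0 He1 (t - s)).
      assert (Hr : rho_eps eps (t - s) <= 3 * eps) by (apply H0; lra).
      assert (Rabs (f s - f t) <= 2 * M).
      { unfold Rminus. eapply Rle_trans. apply Rabs_triang. rewrite Rabs_Ropp.
        pose proof (HM s Hs'). pose proof (HM t Ht). lra. }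
      assert (0 <= M' * eps * rho_eps eps (t - s)).
      { apply Rmult_le_pos; auto. nra. }
      assert (Rabs (f s - f t) * rho_eps eps (t - s) <= 2 * M * (3 * eps)).
      { apply Rmult_le_compat; auto. apply Rabs_pos. }
      lra. }
  assert (HKb : Rabs (RInt K a b) <= M' * eps * J + 6 * M * eps * (b - a)).
  { rewrite <- EU. apply Rabs_le. split.
    - assert (RInt (fun s => - U s) a b <= RInt K a b).
      { apply RInt_le; auto. lra. apply ex_RInt_opp in exU. exact exU.
        intros x Hx. pose proof (Hpt x Hx). apply Rabs_le_between in H. lra. }
      assert (RInt (fun s => - U s) a b = - RInt U a b) by (apply (RInt_opp U a b); auto).
      lra.
    - apply RInt_le; auto. lra. intros x Hx. pose proof (Hpt x Hx). apply Rabs_le_between in H. lra. }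
  assert (HJw : Rabs (J - omega a b eps t) <= 2 * (6 * (- ln eps) * eps + eps)).
  { rewrite Eom. unfold J.
    pose proof (phi_close eps Heps0 He1 (t - a) m1) as P1.
    pose proof (phi_close eps Heps0 He1 (t - b) (- m2)) as P2.
    fold B in P1, P2.
    assert (Q1 : Rabs (Phi eps (t - a) - Defs.tanh (B * m1)) <= 6 * - ln eps * eps + eps).
    { apply P1. unfold m1, Rmax. destruct Rle_dec; [right; left; lra | left; lra]. }
    assert (Q2 : Rabs (Phi eps (t - b) - Defs.tanh (B * - m2)) <= 6 * - ln eps * eps + eps).
    { apply P2. unfold m2, Rmin. destruct Rle_dec; [left; lra | right; right; lra]. }
    replace (B * - m2) with (- (B * m2)) in Q2 by ring. rewrite tanh_odd in Q2.
    replace (Phi eps (t - a) - Phi eps (t - b) - (Defs.tanh (B * m1) + Defs.tanh (B * m2)))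
      with ((Phi eps (t - a) - Defs.tanh (B * m1)) - (Phi eps (t - b) - - Defs.tanh (B * m2))) by ring.
    eapply Rle_trans. apply Rabs_triang. rewrite Rabs_Ropp. lra. }
  assert (HJ2 : J <= 2).
  { unfold J. pose proof (Phi_abs eps Heps0 He1 (t - a)). pose proof (Phi_abs eps Heps0 He1 (t - b)).
    apply Rabs_le_between in H. apply Rabs_le_between in H0. lra. }
  rewrite EI, <- Hgt.
  replace (RInt K a b + g t * J - omega a b eps t * g t) with (RInt K a b + g t * (J - omega a b eps t)) by ring.
  eapply Rle_trans. apply Rabs_triang. rewrite Rabs_mult.
  assert (Hgt' : Rabs (g t) <= M) by (rewrite Hgt; apply HM; auto).
  assert (Rabs (g t) * Rabs (J - omega a b eps t) <= M * (2 * (6 * - ln eps * eps + eps))).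
  { apply Rmult_le_compat; auto; apply Rabs_pos. }
  pose proof (L_lower eps Heps0). pose proof (L_pos eps Heps0 He1).
  unfold C1_norm. fold M M'.
  assert (HS : 1 <= b - a - ln eps) by lra.
  assert (M' * eps * J <= 20 * M' * (b - a - ln eps) * eps).
  { assert (0 <= M' * eps) by nra.
    assert (M' * eps * J <= M' * eps * 2) by (apply Rmult_le_compat_l; auto).
    assert (M' * eps * 2 <= M' * eps * (20 * (b - a - ln eps))) by (apply Rmult_le_compat_l; lra).
    nra. }
  assert (6 * M * eps * (b - a) + M * (2 * (6 * - ln eps * eps + eps)) <= 20 * M * (b - a - ln eps) * eps).
  { assert (0 <= M * eps) by nra.
    assert (M * eps * (6 * (b - a) + 12 * (- ln eps) + 2) <= M * eps * (20 * (b - a - ln eps)))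
      by (apply Rmult_le_compat_l; lra).
    nra. }
  nra.
Qed.
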